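(* Let $(X,\sigma,\tau)$ be a separable, chronologically dense Lorentzian metric space satisfying the S-property, with c-completion $\overline X$. If $a,b,c\in\overline X$ satisfy $a\,\overline{\ll}\,b\,\overline{\ll}\,c$, then $\overline{\tau}(a,c)\geq\overline{\tau}(a,b)+\overline{\tau}(b,c)$.
   Context: A Lorentzian metric space $(X,\sigma,\tau)$ is a topological space with $\tau:X\times X\to[0,\infty]$ lower semicontinuous and satisfying $\tau(x,z)\geq\tau(x,y)+\tau(y,z)$ whenever $\tau(x,y),\tau(y,z)>0$. Write $x\ll y$ iff $\tau(x,y)>0$, $I^+(x)=\{y:x\ll y\}$, $I^-(x)=\{y:y\ll x\}$, $I^\pm[A]=\bigcup_{a\in A}I^\pm(a)$. Future (resp. past) chain: $x_n\ll x_{n+1}$ (resp. $x_{n+1}\ll x_n$) for all $n$. Separable: there is a countable $S$ with $x\ll y\Rightarrow\exists s\in S$, $x\ll s\ll y$. Chronologically dense: every $x$ with $I^-(x)\neq\emptyset$ (resp. $I^+(x)\neq\emptyset$) is the $\sigma$-limit of a future (resp. past) chain. Past set: $P=I^-[P]$; $\downarrow S=I^-[\{p:p\ll q\ \forall q\in S\}]$; IP: past set not the union of two proper past subsets; PIP: IP of the form $I^-(p)$; future sets, $\uparrow S$, IF, PIF dually. For nonempty IP $P$ and IF $F$, $P\sim_S F$ iff $P$ is a maximal IP in $\downarrow F$ and $F$ a maximal IF in $\uparrow P$; $P\sim_S\emptyset$ (resp. $\emptyset\sim_S F$) if the nonempty $P$ (resp. $F$) is S-related to no nonempty IF (resp.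 IP). S-property: for every $x$, $I^-(x)\sim_S I^+(x)$, and no PIF other than $I^+(x)$ (resp. PIP other than $I^-(x)$) is S-related to $I^-(x)$ (resp. $I^+(x)$). c-completion $\overline X=\{(P,F):P\sim_S F\}$. $\overline\tau((P,F),(P',F'))=0$ if $F=\emptyset$ or $P'=\emptyset$, and otherwise $\lim_n\tau(q_n,p'_n)$ for any past chain $\{q_n\}$ with $I^+[\{q_n\}]=F$ and future chain $\{p'_n\}$ with $I^-[\{p'_n\}]=P'$ (well defined). $a\,\overline\ll\,b$ iff $\overline\tau(a,b)>0$. *)

(* Defs.v *)
From HB Require Import structures.
From mathcomp Require Import all_boot all_order all_algebra.
From mathcomp Require Import all_classical all_reals all_analysis.
Set Implicit Arguments. Unset Strict Implicit. Unset Printing Implicit Defensive.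
Import Order.TTheory GRing.Theory Num.Theory.
Local Open Scope classical_set_scope.
Local Open Scope ereal_scope.

Section LMS.
Context {R : realType} {X : topologicalType} (tau : X -> X -> \bar R).

Definition is_LMS : Prop :=
  (forall x y, 0 <= tau x y) /\
  lower_semicontinuous (fun p : X * X => tau p.1 p.2) /\
  (forall x y z, 0 < tau x y -> 0 < tau y z -> tau x z >= tau x y + tau y z).

Definition ll (x y : X) : Prop := 0 < tau x y.
Definition Ifut (x : X) : set X := [set y | ll x y].
Definition Ipast (x : X) : set X := [set y | ll y x].
Definition IfutS (A : set X) : set X := [set y | exists2 a, A a & ll a y].
Definition IpastS (A : set X) : set X := [set y | exists2 a, A a & ll y a].

Definition future_chain (c : nat -> X) : Prop := forall n, ll (c n) (c n.+1).
Definition past_chain (c : nat -> X) : Prop := forall n, ll (c n.+1) (c n).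

Definition separable_LMS : Prop :=
  exists S : set X, countable S /\
    forall x y, ll x y -> exists2 s, S s & ll x s /\ ll s y.

Definition chron_dense : Prop :=
  (forall x, Ipast x !=set0 ->
     exists c, future_chain c /\ c @ \oo --> x) /\
  (forall x, Ifut x !=set0 ->
     exists c, past_chain c /\ c @ \oo --> x).

Definition past_set (P : set X) : Prop := P = IpastS P.
Definition future_set (F : set X) : Prop := F = IfutS F.

Definition downS (S : set X) : set X :=
  IpastS [set p | forall q, S q -> ll p q].
Definition upS (S : set X) : set X :=
  IfutS [set p | forall q, S q -> ll q p].

Definition IP (P : set X) : Prop :=
  past_set P /\
  ~ (exists A B, past_set A /\ past_set B /\ A `<` P /\ B `<` P /\ P = A `|` B).
Definition IF (F : set X) : Prop :=
  future_set F /\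
  ~ (exists A B, future_set A /\ future_set B /\ A `<` F /\ B `<` F /\ F = A `|` B).

Definition maximal_IP_in (P D : set X) : Prop :=
  IP P /\ P `<=` D /\ forall P', IP P' -> P `<=` P' -> P' `<=` D -> P' = P.
Definition maximal_IF_in (F D : set X) : Prop :=
  IF F /\ F `<=` D /\ forall F', IF F' -> F `<=` F' -> F' `<=` D -> F' = F.

Definition Srel_ne (P F : set X) : Prop :=
  IP P /\ IF F /\ P !=set0 /\ F !=set0 /\
  maximal_IP_in P (downS F) /\ maximal_IF_in F (upS P).

Definition Srel (P F : set X) : Prop :=
  Srel_ne P F \/
  (IP P /\ P !=set0 /\ F = set0 /\ forall F', Srel_ne P F' -> False) \/
  (IF F /\ F !=set0 /\ P = set0 /\ forall P', Srel_ne P' F -> False).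

Definition S_property : Prop :=
  forall x, Srel (Ipast x) (Ifut x) /\
    (forall y, IF (Ifut y) -> Srel (Ipast x) (Ifut y) -> Ifut y = Ifut x) /\
    (forall y, IP (Ipast y) -> Srel (Ipast y) (Ifut x) -> Ipast y = Ipast x).

Definition ccompletion : set (set X * set X) := [set a | Srel a.1 a.2].

Definition chains_for (F P' : set X) : set ((nat -> X) * (nat -> X)) :=
  [set qp | past_chain qp.1 /\ IfutS (range qp.1) = F /\
            future_chain qp.2 /\ IpastS (range qp.2) = P'].

(* extended time separation on the c-completion; the limit is taken along
   one (chosen) admissible pair of chains -- by the paper it does not depend
   on that choice. *)
Definition taubar (a b : set X * set X) : \bar R :=
  match pselect (a.2 = set0 \/ b.1 = set0) with
  | left _ => 0
  | right _ =>
    match pselect (exists qp, chains_for a.2 b.1 qp) with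
    | left h => let qp := proj1_sig (cid h) in
                limn (fun n => tau (qp.1 n) (qp.2 n))
    | right _ => 0
    end
  end.

Definition llbar (a b : set X * set X) : Prop := 0 < taubar a b.

End LMS.

(* Main.v *)
Require Import Defs.
From HB Require Import structures.
From mathcomp Require Import all_boot all_order all_algebra.
From mathcomp Require Import all_classical all_reals all_analysis.
Set Implicit Arguments. Unset Strict Implicit.
Import Order.TTheory GRing.Theory Num.Theory.
Local Open Scope classical_set_scope.
Local Open Scope ereal_scope.

Lemma ll_trans (R : realType) (X : topologicalType) (tau : X -> X -> \bar R) :
  is_LMS tau -> forall x y z, ll tau x y -> ll tau y z -> ll tau x z.
Proof.
move=> [H0 [_ Ht]] x y z hxy hyz; rewrite /ll.
apply: (lt_le_trans hxy); apply: le_trans (Ht _ _ _ hxy hyz).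
exact: leeDl.
Qed.

Lemma monoL (R : realType) (X : topologicalType) (tau : X -> X -> \bar R) :
  is_LMS tau -> forall x' x y, ll tau x' x -> tau x y <= tau x' y.
Proof.
move=> [H0 [_ Ht]] x' x y hx.
have [h|h] := leP (tau x y) 0.
  exact: le_trans h (H0 _ _).
apply: le_trans (Ht _ _ _ hx h); exact: leeDr.
Qed.

Lemma monoR (R : realType) (X : topologicalType) (tau : X -> X -> \bar R) :
  is_LMS tau -> forall x y y', ll tau y y' -> tau x y <= tau x y'.
Proof.
move=> [H0 [_ Ht]] x y y' hy.
have [h|h] := leP (tau x y) 0.
  exact: le_trans h (H0 _ _).
apply: le_trans (Ht _ _ _ h hy); exact: leeDl.
Qed.

Lemma past_chain_le (R : realType) (X : topologicalType) (tau : X -> X -> \bar R) :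
  is_LMS tau -> forall q, past_chain tau q -> forall n N, (n <= N)%N ->
  q N = q n \/ ll tau (q N) (q n).
Proof.
move=> HL q hq n; elim=> [|N IH]; first by rewrite leqn0 => /eqP ->; left.
rewrite leq_eqVlt => /orP [/eqP ->|]; first by left.
rewrite ltnS => /IH [e|h]; right; first by rewrite -e; exact: hq.
exact: ll_trans HL _ _ _ (hq N) h.
Qed.

Lemma future_chain_le (R : realType) (X : topologicalType) (tau : X -> X -> \bar R) :
  is_LMS tau -> forall p, future_chain tau p -> forall n N, (n <= N)%N ->
  p N = p n \/ ll tau (p n) (p N).
Proof.
move=> HL q hq n; elim=> [|N IH]; first by rewrite leqn0 => /eqP ->; left.
rewrite leq_eqVlt => /orP [/eqP ->|]; first by left.
rewrite ltnS => /IH [e|h]; right; first by rewrite -e; exact: hq.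
exact: ll_trans HL _ _ _ h (hq N).
Qed.

Lemma mono2 (R : realType) (X : topologicalType) (tau : X -> X -> \bar R) :
  is_LMS tau -> forall q p, past_chain tau q -> future_chain tau p ->
  forall n k N, (n <= N)%N -> (k <= N)%N -> tau (q n) (p k) <= tau (q N) (p N).
Proof.
move=> HL q p hq hp n k N hn hk.
apply: (@le_trans _ _ (tau (q N) (p k))).
  have [->|h] := past_chain_le HL hq hn; first by [].
  exact: monoL HL _ _ _ h.
have [->|h] := future_chain_le HL hp hk; first by [].
exact: monoR HL _ _ _ h.
Qed.

Lemma diag_nd (R : realType) (X : topologicalType) (tau : X -> X -> \bar R) :
  is_LMS tau -> forall q p, past_chain tau q -> future_chain tau p ->
  nondecreasing_seq (fun n => tau (q n) (p n)).
Proof.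
move=> HL q p hq hp i j hij; exact: (mono2 HL hq hp (n:=i) (k:=i) hij hij).
Qed.

Lemma diag_lim (R : realType) (X : topologicalType) (tau : X -> X -> \bar R) :
  is_LMS tau -> forall q p, past_chain tau q -> future_chain tau p ->
  limn (fun n => tau (q n) (p n)) = ereal_sup (range (fun n => tau (q n) (p n))).
Proof.
move=> HL q p hq hp; apply: cvg_lim => //.
exact: ereal_nondecreasing_cvgn (diag_nd HL hq hp).
Qed.

Lemma diag_ub (R : realType) (X : topologicalType) (tau : X -> X -> \bar R) :
  is_LMS tau -> forall q p, past_chain tau q -> future_chain tau p ->
  forall n k, tau (q n) (p k) <= limn (fun n => tau (q n) (p n)).
Proof.
move=> HL q p hq hp n k; rewrite diag_lim //.
apply: le_trans (mono2 HL hq hp (leq_maxl n k) (leq_maxr n k)) _.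
by apply: ereal_sup_ubound; exists (maxn n k).
Qed.
Lemma taubar_ex (R : realType) (X : topologicalType) (tau : X -> X -> \bar R) a b :
  (exists qp, chains_for tau a.2 b.1 qp) ->
  exists qp, chains_for tau a.2 b.1 qp /\
    taubar tau a b = limn (fun n => tau (qp.1 n) (qp.2 n)).
Proof.
move=> hex; rewrite /taubar; case: pselect => [h|_].
  exfalso; case: hex => [[q p] [hq [hF [hp hP]]]] /=; case: h => h.
    have : IfutS tau (range q) (q 0%N) by exists (q 1%N); [exists 1%N|exact: hq].
    by rewrite hF h.
  have : IpastS tau (range p) (p 0%N) by exists (p 1%N); [exists 1%N|exact: hp].
  by rewrite hP h.
case: pselect => [h|//]; by exists (proj1_sig (cid h)); split => //; exact: (proj2_sig (cid h)).
Qed.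

Lemma taubar_pos (R : realType) (X : topologicalType) (tau : X -> X -> \bar R) a b :
  0 < taubar tau a b ->
  exists qp, chains_for tau a.2 b.1 qp /\
    taubar tau a b = limn (fun n => tau (qp.1 n) (qp.2 n)).
Proof.
move=> hpos; apply: taubar_ex; move: hpos; rewrite /taubar.
case: pselect => [_|_]; first by rewrite ltxx.
by case: pselect => [h _|_]; [exact: h | rewrite ltxx].
Qed.

Theorem mainTheorem17 (R : realType) (X : topologicalType)
  (tau : X -> X -> \bar R) :
  is_LMS tau -> separable_LMS tau -> chron_dense tau -> S_property tau ->
  forall a b c : set X * set X,
    ccompletion tau a -> ccompletion tau b -> ccompletion tau c ->
    llbar tau a b -> llbar tau b c ->
    taubar tau a c >= taubar tau a b + taubar tau b c.
Proof.
move=> HL _ _ _ a b c _ hb _ hab hbc.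
have HL' := HL; case: HL' => [H0 [_ Ht]].
have hab' := hab; have hbc' := hbc.
case: (taubar_pos hab') => [[q1 p1] [[/= hq1 [hF1 [hp1 hP1]]] e1]].
case: (taubar_pos hbc') => [[q2 p2] [[/= hq2 [hF2 [hp2 hP2]]] e2]].
case: (@taubar_ex _ _ tau a c) => [|[q3 p3] [[/= hq3 [hF3 [hp3 hP3]]] e3]].
  by exists (q1, p2).
have inP1 : forall n, b.1 (p1 n) by move=> n; rewrite -hP1; exists (p1 n.+1); [exists n.+1|exact: hp1].
have inF2 : forall n, b.2 (q2 n) by move=> n; rewrite -hF2; exists (q2 n.+1); [exists n.+1|exact: hq2].
have inF1 : forall n, a.2 (q1 n) by move=> n; rewrite -hF1; exists (q1 n.+1); [exists n.+1|exact: hq1].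
have inP2 : forall n, c.1 (p2 n) by move=> n; rewrite -hP2; exists (p2 n.+1); [exists n.+1|exact: hp2].
have hsub : b.1 `<=` downS tau b.2.
  case: hb => [[_ [_ [_ [_ [[_ [h _]] _]]]]]|[[_ [_ [h _]]]|[_ [_ [h _]]]]] //.
  - by have := inF2 0%N; rewrite h.
  - by have := inP1 0%N; rewrite h.
set d1 := fun n => tau (q1 n) (p1 n).
set d2 := fun n => tau (q2 n) (p2 n).
set d3 := fun n => tau (q3 n) (p3 n).
have nd1 : nondecreasing_seq d1 := diag_nd HL hq1 hp1.
have nd2 : nondecreasing_seq d2 := diag_nd HL hq2 hp2.
have [n0 pos0] : exists n0, 0 < d1 n0.
  move: hab; rewrite /llbar e1 /= (diag_lim HL hq1 hp1) => /ereal_sup_gt [y [n _ <-]].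
  by exists n.
have [n1 pos1] : exists n1, 0 < d2 n1.
  move: hbc; rewrite /llbar e2 /= (diag_lim HL hq2 hp2) => /ereal_sup_gt [y [n _ <-]].
  by exists n.
rewrite e1 e2 e3 /=.
have c1 : cvgn d1 := ereal_nondecreasing_is_cvgn nd1.
have c2 : cvgn d2 := ereal_nondecreasing_is_cvgn nd2.
rewrite -limeD //; last first.
  apply: ge0_adde_def; rewrite inE.
    by apply: lime_ge => //; apply: nearW => n; exact: H0.
  by apply: lime_ge => //; apply: nearW => n; exact: H0.
apply: lime_le.
  by apply: ereal_nondecreasing_is_cvgn => i j hij; apply: leeD; [exact: nd1|exact: nd2].
near=> n.
have hn0 : (n0 <= n)%N by near: n; exists n0.
have hn1 : (n1 <= n)%N by near: n; exists n1.
have p1n : 0 < d1 n := lt_le_trans pos0 (nd1 _ _ hn0).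
have p2n : 0 < d2 n := lt_le_trans pos1 (nd2 _ _ hn1).
have [r hr hpr] := hsub _ (inP1 n).
have hrq : ll tau r (q2 n) := hr _ (inF2 n).
have l1 : ll tau (q1 n) r := ll_trans HL p1n hpr.
have l2 : ll tau r (p2 n) := ll_trans HL hrq p2n.
apply: (@le_trans _ _ (tau (q1 n) (p2 n))).
  apply: le_trans (Ht _ _ _ l1 l2); apply: leeD.
    apply: le_trans (Ht _ _ _ p1n hpr); exact: leeDl.
  apply: le_trans (Ht _ _ _ hrq p2n); exact: leeDr.
have := inF1 n; rewrite -hF3 => -[_ [m1 _ <-] hm1].
have := inP2 n; rewrite -hP3 => -[_ [m2 _ <-] hm2].
apply: le_trans (diag_ub HL hq3 hp3 m1 m2).
apply: le_trans (monoL HL _ hm1) _.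
exact: (@monoR R X tau HL (q3 m1) _ _ hm2).
Unshelve. all: by end_near.
Qed.
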